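(* Let $f\colon\mathbb Z^m\to\mathbb Q\cup\{\infty\}$ be SBO jump M-convex. Let $r\in\mathbb Z^m$, let $z^{(1)},z^{(2)}\in\mathbb Z^m$ with $z^{(1)},z^{(2)}\equiv r\pmod 2$, and let $i^*\in[m]$ satisfy $z^{(1)}_{i^*}-z^{(2)}_{i^*}\ge2$. Then there exist $z^{(1)\prime},z^{(2)\prime}\in\mathbb Z^m$ such that: - $z^{(1)\prime},z^{(2)\prime}\equiv r\pmod2$; - $z^{(1)\prime}+z^{(2)\prime}=z^{(1)}+z^{(2)}$; - $z^{(1)\prime}_{i^*}=z^{(1)}_{i^*}-2$ and $z^{(2)\prime}_{i^*}=z^{(2)}_{i^*}+2$; - for all $i\in[m]$, if $z^{(1)}_i=z^{(2)}_i$ then $z^{(1)}_i=z^{(1)\prime}_i=z^{(2)\prime}_i=z^{(2)}_i$; - $f(z^{(1)\prime})+f(z^{(2)\prime})\le f(z^{(1)})+f(z^{(2)})$.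
   Context: For $x,y\in\mathbb Z^m$, write $x\sqsubseteq y$ if $|x_i|\le|y_i|$ and $x_iy_i\ge0$ for all $i$. A $2$-step decomposition of $d\in\mathbb Z^m$ is a multiset $p^{(1)},\dots,p^{(\ell)}\in\mathbb Z^m$ with $\|p^{(k)}\|_1=2$ and $p^{(k)}\sqsubseteq d$ for all $k$, and $d=\sum_kp^{(k)}$. $f$ is SBO jump M-convex if the following holds for all $z^{(1)},z^{(2)}$ with finite $f$-values. There must exist a $2$-step decomposition $p^{(1)},\dots,p^{(\ell)}$ of $z^{(2)}-z^{(1)}$ and reals $g^{(1)},\dots,g^{(\ell)}$ such that: - $f(z^{(2)})=f(z^{(1)})+\sum_kg^{(k)}$; - $f(z^{(1)}+\sum_{k\in I}p^{(k)})\le f(z^{(1)})+\sum_{k\in I}g^{(k)}$ for all $I\subseteq[\ell]$. Congruence modulo $2$ is componentwise. *)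

(* Defs.v *)
From HB Require Import structures.
From mathcomp Require Import all_boot all_order all_algebra.
From mathcomp Require Import reals.
Set Implicit Arguments. Unset Strict Implicit. Unset Printing Implicit Defensive.
Import Order.TTheory GRing.Theory Num.Theory.
Local Open Scope ring_scope.

Notation zvec m := {ffun 'I_m -> int}.

(* Q ∪ {∞}: None encodes ∞. *)
Definition qinf := option rat.

Definition qinf_add (x y : qinf) : qinf :=
  match x, y with Some a, Some b => Some (a + b) | _, _ => None end.

Definition qinf_le (x y : qinf) : bool :=
  match x, y with
  | _, None => true
  | None, Some _ => false
  | Some a, Some b => a <= b
  end.

Definition qinf_leR (R : realType) (x : qinf) (y : R) : Prop :=
  match x with Some a => ratr a <= y | None => False end.

Definition sqsub m (x y : zvec m) : Prop :=
  forall i, `|x i| <= `|y i| /\ 0 <= x i * y i.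

Definition l1norm m (x : zvec m) : int := \sum_i `|x i|.

Definition two_step_decomp m (d : zvec m) (l : nat) (p : 'I_l -> zvec m) : Prop :=
  (forall k, l1norm (p k) = 2 /\ sqsub (p k) d) /\ \sum_(k < l) p k = d.

Definition SBO_jump_Mconvex (R : realType) m (f : zvec m -> qinf) : Prop :=
  forall (z1 z2 : zvec m) (a1 a2 : rat), f z1 = Some a1 -> f z2 = Some a2 ->
  exists (l : nat) (p : 'I_l -> zvec m) (g : 'I_l -> R),
    [/\ two_step_decomp (z2 - z1) p,
        ratr a2 = ratr a1 + \sum_(k < l) g k &
        forall I : {set 'I_l},
          qinf_leR (f (z1 + \sum_(k in I) p k)) (ratr a1 + \sum_(k in I) g k)].

Definition congr_mod2 m (x y : zvec m) : Prop :=
  forall i, (x i = y i %[mod 2])%Z.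

(* Main.v *)
Require Import Defs.
From HB Require Import structures.
From mathcomp Require Import all_boot all_order all_algebra.
From mathcomp Require Import reals.
From mathcomp Require Import zify lra.
Import Order.TTheory GRing.Theory Num.Theory.
Set Implicit Arguments. Unset Strict Implicit. Unset Printing Implicit Defensive.
Section Key.
Variables (T : finType) (K : eqType) (O : K -> {set T}) (v : T).

Definition deg x (g : seq K) := count (fun k => x \in O k) g.
Definition oset (g : seq K) := [set x | odd (deg x g)].
Definition okg g := [&& ~~ odd #|oset g|, #|oset g| <= 2 & deg v g <= 1].
Definition cnt x (s : seq (seq K)) := count (fun g => x \in oset g) s.

Lemma two_pt (A : {set T}) w : w \in A -> ~~ odd #|A| -> #|A| <= 2 ->
  exists2 a, a != w & forall x, (x \in A) = (x == w) || (x == a).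
Proof.
move=> wA oA cA.
have c1 : #|A :\ w| == 1.
  move: oA cA; rewrite (cardsD1 w A) wA.
  by case: #|A :\ w| => [|[|[|]]].
case/cards1P: c1 => a Ha.
have aA : a \in A :\ w by rewrite Ha set11.
exists a; first by move: aA; rewrite in_setD1 => /andP[].
move=> x; case: (eqVneq x w) => [->|xw] //=.
by rewrite -in_set1 -Ha in_setD1 xw.
Qed.

Lemma deg_cat x g1 g2 : deg x (g1 ++ g2) = deg x g1 + deg x g2.
Proof. by rewrite /deg count_cat. Qed.

Lemma in_oset x g : (x \in oset g) = odd (deg x g).
Proof. by rewrite inE. Qed.

Lemma key n : forall s, size s <= n -> all okg s ->
  (forall x, ~~ odd (cnt x s)) -> (exists2 g, g \in s & v \in oset g) ->
  exists t u, [/\ perm_eq (t ++ u) s, (forall x, ~~ odd (deg x (flatten t)))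
                & deg v (flatten t) = 2].
Proof.
elim: n => [|n IH] s.
  by case: s => // _ _ _ [].
move=> sz okS ev [gA gAs vA].
have okA : okg gA by move/allP: okS => /(_ _ gAs).
case/and3P: okA => oA cA dA.
have [a av Aa] := two_pt vA oA cA.
set s1 := rem gA s.
have ps1 : perm_eq s (gA :: s1) by apply: perm_to_rem.
have aA : a \in oset gA by rewrite Aa eqxx orbT.
have cs1 : odd (cnt a s1).
  have := ev a; rewrite /cnt; move/permP: (ps1) => ->.
  by rewrite /= aA /=; case: odd.
have : has (fun g => a \in oset g) s1 by rewrite has_count; move: cs1; rewrite /cnt; case: count.
case/hasP => gB gBs1 aB.
have gBs : gB \in s by rewrite (perm_mem ps1) inE gBs1 orbT.
have okB : okg gB by move/allP: okS => /(_ _ gBs).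
case/and3P: okB => oB cB dB.
have [b ba Bb] := two_pt aB oB cB.
set s' := rem gB s1.
have ps : perm_eq s [:: gA, gB & s'].
  by apply: (perm_trans ps1); rewrite perm_cons; apply: perm_to_rem.
have deg1 g : v \in oset g -> deg v g <= 1 -> deg v g = 1.
  by rewrite in_oset; case: (deg v g) => [|[|]].
have degA : deg v gA = 1 by apply: deg1.
case: (eqVneq b v) => [bv|bv].
  exists [:: gA; gB], s'; split.
  - by rewrite perm_sym.
  - move=> x; rewrite /= cats0 deg_cat oddD -!in_oset Aa Bb bv.
    by case: (x == v); case: (x == a).
  - rewrite /= cats0 deg_cat degA deg1 //.
    by rewrite Bb bv eqxx orbT.
set C := gA ++ gB.
have oC x : (x \in oset C) = (x == v) || (x == b).
  rewrite in_oset deg_cat oddD -!in_oset Aa Bb.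
  case: (eqVneq x v) => [->|xv]; first by rewrite eq_sym (negbTE av) eq_sym (negbTE bv).
  case: (eqVneq x a) => [->|xa] /=; last by case: (x == b).
  by rewrite eq_sym (negbTE ba).
have vB : v \notin oset gB by rewrite Bb negb_or eq_sym (negbTE av) eq_sym bv.
have degB : deg v gB = 0.
  by move: vB dB; rewrite in_oset; case: (deg v gB) => [|[|]].
have [t' [u' [pt ev' dv']]] : exists t u, [/\ perm_eq (t ++ u) (C :: s'),
    (forall x, ~~ odd (deg x (flatten t))) & deg v (flatten t) = 2].
  apply: IH.
  - by move: sz; rewrite (perm_size ps) /=.
  - move: okS; rewrite (perm_all _ ps) => /and3P [_ _ Hs']; apply/andP; split => //.
    rewrite /okg; have -> : oset C = [set v; b].
      by apply/setP => x; rewrite oC !inE.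
    by rewrite cards2 eq_sym bv /= deg_cat degA degB.
  - move=> x; move: (ev x); rewrite /cnt; move/permP: (ps) => -> /=.
    rewrite /= oC.
    have -> : (x == v) || (x == b) = (x \in oset gA) (+) (x \in oset gB).
      by rewrite -oC !in_oset deg_cat oddD.
    rewrite !oddD; move: (x \in oset gA) (x \in oset gB) (odd (count _ s')) => p q r; by case: p; case: q; case: r.
  - by exists C; [rewrite inE eqxx | rewrite oC eqxx].
case: (boolP (C \in t')) => Ct.
  exists [:: gA, gB & rem C t'], u'; split.
  - rewrite (permPr ps) /= !perm_cons.
    have h : perm_eq (t' ++ u') (C :: (rem C t' ++ u')).
      by rewrite -cat_cons perm_cat2r perm_to_rem.
    rewrite -(perm_cons C) -(permPl h); exact: pt.
  - move=> x; have -> : deg x (flatten [:: gA, gB & rem C t']) = deg x (flatten t').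
      rewrite /deg; have := perm_flatten (perm_to_rem Ct); move/permP => ->.
      by rewrite /= /deg /C !count_cat addnA.
    exact: ev'.
  - have -> : deg v (flatten [:: gA, gB & rem C t']) = deg v (flatten t').
      rewrite /deg; have := perm_flatten (perm_to_rem Ct); move/permP => ->.
      by rewrite /= /deg /C !count_cat addnA.
    exact: dv'.
exists t', [:: gA, gB & rem C u']; split => //.
have Cu : C \in u'.
  by move: (perm_mem pt C); rewrite mem_cat (negbTE Ct) inE eqxx /= => ->.
rewrite (permPr ps) -[[:: gA, gB & _]]/([:: gA; gB] ++ _) perm_catCA /= !perm_cons.
have h : perm_eq (t' ++ u') (C :: t' ++ rem C u').
  rewrite perm_sym -[C :: _]/([:: C] ++ _) -perm_catCA /= perm_sym perm_cat2l.
  exact: perm_to_rem.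
rewrite -(perm_cons C) -(permPl h); exact: pt.
Qed.
End Key.

Local Open Scope ring_scope.
Lemma L1 (J : Type) (r : seq J) (F : J -> int) :
  (2 %| \sum_(j <- r) F j)%Z = ~~ odd (count (fun j => ~~ (2 %| F j)%Z) r).
Proof.
elim: r => [|j r IH]; first by rewrite big_nil.
rewrite big_cons /= oddD -[odd (count _ r)]negbK -IH oddb.
move: (F j) (\sum_(j <- r) F j) => x y.
by case: (boolP (2 %| x)%Z) => hx; case: (boolP (2 %| y)%Z) => hy /=; lia.
Qed.
Lemma L2 (J : Type) (r : seq J) (F : J -> int) :
  (count (fun j => ~~ (2 %| F j)%Z) r)%:Z <= \sum_(j <- r) `|F j|.
Proof.
elim: r => [|j r IH]; first by rewrite big_nil.
rewrite big_cons /=. move: IH; move: (F j) (\sum_(j <- r) `|F j|) (count _ r) => x y c.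
by case: (boolP (2 %| x)%Z) => hx /=; lia.
Qed.
Lemma L3 (J : Type) (r : seq J) (F : J -> int) :
  (forall j, F j = 0 \/ F j = -1) ->
  \sum_(j <- r) F j = - (count (fun j => ~~ (2 %| F j)%Z) r)%:Z.
Proof.
move=> hF; elim: r => [|j r IH]; first by rewrite big_nil.
rewrite big_cons /= IH. have := hF j. move: (F j) (count _ r) => x c.
by case=> ->; rewrite /=; lia.
Qed.

Lemma L4 m (x : zvec m) i : `|x i| <= l1norm x.
Proof.
rewrite /l1norm (bigD1 i) //= lerDl sumr_ge0 // => j _; exact: normr_ge0.
Qed.

Lemma L5 m (x : zvec m) i j : i != j -> `|x i| + `|x j| <= l1norm x.
Proof.
move=> ij; rewrite /l1norm (bigD1 i) //= (bigD1 j) 1?eq_sym //= addrA lerDl.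
by rewrite sumr_ge0 // => k _; exact: normr_ge0.
Qed.

Lemma splitI (V : zmodType) l (F : 'I_l -> V) (I : {set 'I_l}) :
  \sum_k F k = \sum_(k in I) F k + \sum_(k in ~: I) F k.
Proof.
rewrite (bigID (mem I)) /=; congr (_ + _); apply: eq_bigl => k; by rewrite ?inE.
Qed.

Unset Implicit Arguments.
Theorem lemma18 (R : realType) (m : nat) (f : zvec m -> qinf)
  (hf : SBO_jump_Mconvex R f) (r z1 z2 : zvec m)
  (h1 : congr_mod2 z1 r) (h2 : congr_mod2 z2 r) (istar : 'I_m)
  (hi : 2 <= z1 istar - z2 istar) :
  exists z1' z2' : zvec m,
    [/\ congr_mod2 z1' r /\ congr_mod2 z2' r,
        z1' + z2' = z1 + z2,
        z1' istar = z1 istar - 2 /\ z2' istar = z2 istar + 2,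
        (forall i, z1 i = z2 i ->
           [/\ z1 i = z1' i, z1' i = z2' i & z2' i = z2 i]) &
        qinf_le (qinf_add (f z1') (f z2')) (qinf_add (f z1) (f z2))].
Proof.
have build : forall P : zvec m, (forall i, (2 %| P i)%Z) -> P istar = -2 ->
    (forall i, z1 i = z2 i -> P i = 0) ->
    qinf_le (qinf_add (f (z1 + P)) (f (z2 - P))) (qinf_add (f z1) (f z2)) ->
  exists z1' z2' : zvec m,
    [/\ congr_mod2 z1' r /\ congr_mod2 z2' r,
        z1' + z2' = z1 + z2,
        z1' istar = z1 istar - 2 /\ z2' istar = z2 istar + 2,
        (forall i, z1 i = z2 i ->
           [/\ z1 i = z1' i, z1' i = z2' i & z2' i = z2 i]) &
        qinf_le (qinf_add (f z1') (f z2')) (qinf_add (f z1) (f z2))].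
  move=> P hP hPs hP0 hle; exists (z1 + P), (z2 - P); split => //.
  - split => i; rewrite !ffunE; [move: (h1 i) | move: (h2 i)]; move: (hP i);
      [move: (z1 i) | move: (z2 i)]; move: (P i) (r i) => b c a; lia.
  - by rewrite addrACA subrr addr0.
  - by rewrite !ffunE hPs opprK.
  - move=> i e; rewrite !ffunE hP0 // e addr0 ?subr0 ?oppr0 ?addr0. by [].
have triv : qinf_add (f z1) (f z2) = None ->
  exists z1' z2' : zvec m,
    [/\ congr_mod2 z1' r /\ congr_mod2 z2' r,
        z1' + z2' = z1 + z2,
        z1' istar = z1 istar - 2 /\ z2' istar = z2 istar + 2,
        (forall i, z1 i = z2 i ->
           [/\ z1 i = z1' i, z1' i = z2' i & z2' i = z2 i]) &
        qinf_le (qinf_add (f z1') (f z2')) (qinf_add (f z1) (f z2))].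
  move=> hN; apply: (build [ffun i => if i == istar then -2 else 0]).
  - by move=> i; rewrite ffunE; case: (i == istar).
  - by rewrite ffunE eqxx.
  - move=> i e; rewrite ffunE; case: (eqVneq i istar) => // ei.
    by move: hi; rewrite -ei e subrr.
  - by rewrite hN; case: qinf_add.
have [[a1 E1]|E1] : (exists a1, f z1 = Some a1) \/ f z1 = None
  by case: (f z1) => [a|]; [left; exists a | right].
  2: by apply: triv; rewrite E1.
have [[a2 E2]|E2] : (exists a2, f z2 = Some a2) \/ f z2 = None
  by case: (f z2) => [a|]; [left; exists a | right].
  2: by apply: triv; rewrite E2; case: (f z1).
have [l [p [g [[hp hsum] hg hI]]]] := hf _ _ _ _ E1 E2.
set d := z2 - z1 in hsum hp.
have dE i : d i = z2 i - z1 i by rewrite !ffunE.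
have hfI : forall I : {set 'I_l}, qinf_le (qinf_add (f (z1 + \sum_(k in I) p k))
     (f (z2 - \sum_(k in I) p k))) (qinf_add (f z1) (f z2)).
  move=> I.
  have e2 : z2 - \sum_(k in I) p k = z1 + \sum_(k in ~: I) p k.
    have H := splitI p I; rewrite hsum in H.
    have -> : \sum_(k in ~: I) p k = d - \sum_(k in I) p k.
      by rewrite H [X in X - _]addrC addrK.
    by rewrite /d addrA [z1 + _]addrC subrK.
  have h1' := hI I; have h2' := hI (~: I); rewrite -e2 in h2'.
  move: h1' h2'; rewrite E1 E2 /qinf_leR.
  case: (f (z1 + _)) => [b1|] //; case: (f (z2 - _)) => [b2|] // hb1 hb2 /=.
  rewrite -(ler_rat R) !rmorphD /=.
  have := splitI g I; lra.
have hz : forall (I : {set 'I_l}) i, z1 i = z2 i -> (\sum_(k in I) p k) i = 0.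
  move=> I i e; rewrite sum_ffunE big1 // => k _.
  have [_ hs] := hp k; have [h _] := hs i; move: h; rewrite dE e subrr normr0.
  by rewrite normr_le0 => /eqP.
have hdv : d istar <= -2 by rewrite dE; lia.
have hpv k : [\/ p k istar = 0, p k istar = -1 | p k istar = -2].
  have [hl hs] := hp k; have [_ hsg] := hs istar.
  have := L4 (p k) istar; rewrite hl => hn.
  have : p k istar = 0 \/ p k istar = -1 \/ p k istar = -2.
    move: hsg hdv hn; move: (p k istar) (d istar) => x y; nia.
  by case=> [->|[->|->]]; [constructor 1|constructor 2|constructor 3].
case: (pickP (fun k => p k istar == -2)) => [k /eqP hk | hnone].
  apply: (build (\sum_(k' in [set k]) p k')) => //; rewrite ?big_set1 //;
    last by move=> i e; rewrite -(hz [set k] i e) big_set1.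
  move=> i; case: (eqVneq i istar) => [->|ii]; first by rewrite hk.
  have := L5 (p k) ii; have [hl _] := hp k; rewrite hl hk.
  move=> h; have : p k i = 0 by move: h; move: (p k i) => x; lia.
  by move=> ->.
have hpv' k : p k istar = 0 \/ p k istar = -1.
  case: (hpv k) => [->|->|h]; [by left|by right|].
  by move: (hnone k); rewrite h eqxx.
pose O k := [set i | ~~ (2 %| p k i)%Z].
have osetE k : oset O [:: k] = O k.
  by apply/setP => i; rewrite !inE /deg /= addn0 inE oddb.
set s := [seq [:: k] | k <- index_enum 'I_l].
have [t [u [pt hev hdv2]]] : exists t u, [/\ perm_eq (t ++ u) s,
     (forall x, ~~ odd (deg O x (flatten t))) & deg O istar (flatten t) = 2].
  apply: (@key _ _ O istar (size s)) => //.
  - rewrite all_map; apply/allP => k _ /=; rewrite /okg osetE.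
    have cO : #|O k| = count (fun i => ~~ (2 %| p k i)%Z) (index_enum 'I_m).
      rewrite -sum1_card -sum1_count; apply: eq_bigl => i; by rewrite inE.
    have [hl _] := hp k.
    apply/and3P; split.
    + have := L1 (index_enum 'I_m) (fun i => `|p k i|); rewrite -/(l1norm (p k)) hl /=.
      move=> H; rewrite cO.
      have -> : count (fun i => ~~ (2 %| p k i)%Z) (index_enum 'I_m) =
          count (fun j => ~~ (2 %| `|p k j|)%Z) (index_enum 'I_m).
        by apply: eq_count => i /=; congr (~~ _); move: (p k i) => x; lia.
      by rewrite -H.
    + have := L2 (index_enum 'I_m) (p k); rewrite -/(l1norm (p k)) hl -cO; move: #|O k| => c; lia.
    + by rewrite /deg /=; case: (_ \in _).
  - move=> x; rewrite /cnt count_map.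
    rewrite (eq_count (a2 := fun k => ~~ (2 %| p k x)%Z)); last first.
      by move=> k /=; rewrite osetE inE.
    rewrite -L1 -sum_ffunE.
    have -> : \sum_(k <- index_enum 'I_l) p k = \sum_(k < l) p k by [].
    rewrite hsum dE; have := h1 x; have := h2 x; lia.
  - have hsv := @L3 _ (index_enum 'I_l) (fun k => p k istar) hpv'.
    have : (\sum_(k <- index_enum 'I_l) p k) istar = d istar by rewrite -hsum.
    rewrite sum_ffunE hsv => hc.
    have : has (fun k => ~~ (2 %| p k istar)%Z) (index_enum 'I_l).
      rewrite has_count; move: hc hdv; case: count => // <-; lia.
    case/hasP => k kin hk; exists [:: k]; first by apply: map_f.
    by rewrite osetE inE.
have ut : uniq (flatten t).
  have := perm_flatten pt; rewrite flatten_cat flatten_seq1 => /perm_uniq.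
  by rewrite index_enum_uniq cat_uniq => /and3P[].
pose I := [set k in flatten t].
have PI i : (\sum_(k in I) p k) i = \sum_(k <- flatten t) p k i.
  rewrite sum_ffunE (big_uniq _ ut); apply: eq_bigl => k; by rewrite inE.
apply: (build (\sum_(k in I) p k)) => //.
- move=> i; rewrite PI L1.
  have := hev i; rewrite /deg (eq_count (a2 := fun k => ~~ (2 %| p k i)%Z)) //.
  by move=> k; rewrite inE.
- rewrite PI (@L3 _ _ (fun k => p k istar) hpv').
  move: hdv2; rewrite /deg (eq_count (a2 := fun k => ~~ (2 %| p k istar)%Z)) => [->//|].
  by move=> k; rewrite inE.
- by move=> i; apply: hz.
Qed.
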